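(* Let $c>0$ be an integer and $\mu,\nu\in\mathbb R$, and let $D=D^{\mu,\nu}_c$ be the quantum Heisenberg manifold. For every $n\in\mathbb Z$ there exist $\xi_1^n,\xi_2^n\in D^{(n)}$ such that $$(\xi_1^n)^*\xi_1^n+(\xi_2^n)^*\xi_2^n=1,\qquad \xi_1^n(\xi_1^n)^*+\xi_2^n(\xi_2^n)^*=1.$$ Furthermore, $\xi_1^n$ and $\xi_2^n$ can be chosen to be smooth functions.
   Context: Write $e(x)=e^{2\pi ix}$. Let $D_0$ be the space of functions $F:\mathbb R\times S^1\times\mathbb Z\to\mathbb C$, $(x,y,p)\mapsto F(x,y,p)$, such that $p\mapsto F(\cdot,\cdot,p)$ is finitely supported with values in bounded continuous functions on $\mathbb R\times S^1$, and $F(x+1,y,p)=e(-cp(y-p\nu))F(x,y,p)$. It is a $*$-algebra with product $(F_1\cdot F_2)(x,y,p)=\sum_{q\in\mathbb Z}F_1(x,y,q)F_2(x-2q\mu,y-2q\nu,p-q)$ and involution $F^*(x,y,p)=\overline{F(x-2p\mu,y-2p\nu,-p)}$. The quantum Heisenberg manifold $D^{\mu,\nu}_c$ (Rieffel) is the C*-completion of $D_0$. For $n\in\mathbb Z$, $D^{(n)}$ denotes the set of elements of the form $F(x,y,p)=\delta_{n,p}f(x,y)$ with $f$ continuous on $\mathbb R\times S^1$ and $f(x+1,y)=e(-cn(y-n\nu))f(x,y)$ (the $n$-th spectral subspace of the gauge action); the unit $1$ is the function $\delta_{0,p}$. *)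

(* Defs.v *)
From Stdlib Require Import Reals ZArith List ClassicalEpsilon.
From Coquelicot Require Import Coquelicot.
Open Scope R_scope.

Definition qh_e (t : R) : C := (cos (2 * PI * t), sin (2 * PI * t)).

(** Elements of (the ambient space of) D_0: functions F : R x S^1 x Z -> C,
    with S^1 = R/Z encoded by 1-periodicity in y. *)
Definition HFun := R -> R -> Z -> C.

Definition qh_continuous2 (g : R -> R -> C) : Prop :=
  forall x y, continuous (fun z : R * R => g (fst z) (snd z)) (x, y).

Definition qh_in_D0 (c : Z) (nu : R) (F : HFun) : Prop :=
  (exists N : nat, forall x y q, (Z.of_nat N < Z.abs q)%Z -> F x y q = 0%C) /\
  (forall p, qh_continuous2 (fun x y => F x y p)) /\
  (forall p, exists M, forall x y, Cmod (F x y p) <= M) /\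
  (forall x y p, F x (y + 1) p = F x y p) /\
  (forall x y p, F (x + 1) y p =
     Cmult (qh_e (- IZR c * IZR p * (y - IZR p * nu))) (F x y p)).

Definition qh_supp_bound (F : HFun) : nat :=
  epsilon (inhabits 0%nat)
    (fun N => forall x y q, (Z.of_nat N < Z.abs q)%Z -> F x y q = 0%C).

Definition qh_zsum (N : nat) (a : Z -> C) : C :=
  fold_right Cplus 0%C
    (map (fun k => a (Z.of_nat k - Z.of_nat N)%Z) (seq 0 (2 * N + 1))).

(** The sum is over all q in Z; since F1 is finitely supported it equals the
    sum over the window [-qh_supp_bound F1, qh_supp_bound F1]. *)
Definition qh_mul (mu nu : R) (F1 F2 : HFun) : HFun :=
  fun x y p => qh_zsum (qh_supp_bound F1)
    (fun q => Cmult (F1 x y q)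
                    (F2 (x - 2 * IZR q * mu) (y - 2 * IZR q * nu) (p - q)%Z)).

Definition qh_add (F1 F2 : HFun) : HFun := fun x y p => Cplus (F1 x y p) (F2 x y p).

Definition qh_star (mu nu : R) (F : HFun) : HFun :=
  fun x y p => Cconj (F (x - 2 * IZR p * mu) (y - 2 * IZR p * nu) (- p)%Z).

Definition qh_one : HFun := fun _ _ p => if Z.eqb p 0 then 1%C else 0%C.

Definition qh_in_Dn (c : Z) (nu : R) (n : Z) (F : HFun) : Prop :=
  qh_in_D0 c nu F /\ (forall x y p, p <> n -> F x y p = 0%C).

Fixpoint qh_Ck (k : nat) (g : R -> R -> R) : Prop :=
  (forall x y, continuous (fun z : R * R => g (fst z) (snd z)) (x, y)) /\
  match k with
  | O => True
  | S k' => exists g1 g2 : R -> R -> R,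
      (forall x y, is_derive (fun t => g t y) x (g1 x y)) /\
      (forall x y, is_derive (fun t => g x t) y (g2 x y)) /\
      qh_Ck k' g1 /\ qh_Ck k' g2
  end.

Definition qh_smooth (f : R -> R -> C) : Prop :=
  forall k, qh_Ck k (fun x y => fst (f x y)) /\ qh_Ck k (fun x y => snd (f x y)).

(* Main.v *)
Require Import Defs.
From Stdlib Require Import Reals ZArith.
From Coquelicot Require Import Coquelicot.
From Stdlib Require Import Lra Lia FunctionalExtensionality List ClassicalEpsilon.
Open Scope R_scope.

Lemma locR (x : R) (P : R -> Prop) (eps : R) : 0 < eps ->
  (forall t, Rabs (t - x) < eps -> P t) -> locally x P.
Proof.
  intros He H. exists (mkposreal eps He). intros t Ht. apply H. exact Ht.
Qed.

Definition phi (j : nat) (x : R) : R :=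
  if Rlt_dec 0 x then exp (- / x) / x ^ j else 0.

Lemma sum_ge_last (f : nat -> R) n : (forall k, 0 <= f k) -> f n <= sum_f_R0 f n.
Proof.
  intros H. assert (forall m, 0 <= sum_f_R0 f m).
  { induction m; simpl; [apply H| specialize (H (S m)); lra]. }
  destruct n; simpl. lra. specialize (H0 n). lra.
Qed.

Lemma exp_ge_pow (t : R) n : 0 <= t -> t ^ n / INR (fact n) <= exp t.
Proof.
  intros Ht. eapply Rle_trans; [| apply (exp_ge_taylor t n Ht)].
  apply (sum_ge_last (fun k => t ^ k / INR (fact k))).
  intros k. apply Rmult_le_pos. apply pow_le; lra.
  apply Rlt_le, Rinv_0_lt_compat, INR_fact_lt_0.
Qed.

Lemma phi_bound j h : 0 < h -> phi j h <= INR (fact (j+2)) * h ^ 2.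
Proof.
  intros Hh. unfold phi. destruct (Rlt_dec 0 h); [|lra].
  set (n := (j+2)%nat). set (K := INR (fact n)).
  assert (HK : 0 < K) by apply INR_fact_lt_0.
  assert (E := exp_ge_pow (/ h) n (Rlt_le _ _ (Rinv_0_lt_compat _ Hh))).
  fold K in E.
  assert (Hp : 0 < h ^ j) by (apply pow_lt; lra).
  assert (Hexp : exp (- / h) = / exp (/ h)) by (rewrite exp_Ropp; reflexivity).
  rewrite Hexp.
  assert (Hpos : 0 < exp (/ h)) by apply exp_pos.
  assert (Hn : (/ h) ^ n = / h ^ n) by (rewrite pow_inv; reflexivity).
  rewrite Hn in E.
  assert (Hhn : 0 < h ^ n) by (apply pow_lt; lra).
  assert (hn : h ^ n = h ^ j * h ^ 2) by (unfold n; rewrite pow_add; reflexivity).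
  assert (A : / exp (/ h) <= K * h ^ n).
  { apply (Rmult_le_reg_l (exp (/ h))); auto.
    rewrite Rinv_r by lra.
    apply (Rmult_le_reg_l (/ h ^ n / K)).
    apply Rmult_lt_0_compat; apply Rinv_0_lt_compat; lra.
    replace (/ h ^ n / K * (exp (/ h) * (K * h ^ n))) with (exp (/ h)) by (field; lra).
    lra. }
  rewrite hn in A.
  apply (Rmult_le_reg_r (h ^ j)); auto.
  unfold Rdiv. rewrite Rmult_assoc, Rinv_l by lra. nra.
Qed.

Lemma phi_nonneg j x : 0 <= phi j x.
Proof.
  unfold phi. destruct (Rlt_dec 0 x); [|lra].
  apply Rmult_le_pos. apply Rlt_le, exp_pos. apply Rlt_le, Rinv_0_lt_compat, pow_lt; lra.
Qed.

Lemma phi_pos j x : 0 < x -> 0 < phi j x.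
Proof.
  intros H. unfold phi. destruct (Rlt_dec 0 x); [|lra].
  apply Rmult_lt_0_compat. apply exp_pos. apply Rinv_0_lt_compat, pow_lt; lra.
Qed.

Lemma phi_zero j x : x <= 0 -> phi j x = 0.
Proof. intros H. unfold phi. destruct (Rlt_dec 0 x); lra. Qed.

Lemma phi_deriv j x :
  is_derive (phi j) x (- INR j * phi (S j) x + phi (S (S j)) x).
Proof.
  destruct (Rlt_dec 0 x) as [Hx|Hx].
  - apply (is_derive_ext_loc (fun t => exp (- / t) / t ^ j)).
    + apply (locR x _ x Hx). intros t Ht. unfold phi.
      destruct (Rlt_dec 0 t); [reflexivity|]. exfalso.
      apply Rabs_def2 in Ht. lra.
    + unfold phi. destruct (Rlt_dec 0 x); [|lra].
      auto_derive. repeat split; try lra. apply pow_nonzero; lra.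
      destruct j. simpl. field. lra.
      rewrite S_INR. simpl pred. simpl. field. split; [apply pow_nonzero; lra | lra].
  - destruct (Req_dec x 0) as [H0|H0].
    + subst x. rewrite (phi_zero (S j)), (phi_zero (S (S j))) by lra.
      replace (- INR j * 0 + 0) with 0 by ring.
      apply is_derive_Reals. intros eps Heps.
      set (K := INR (fact (j+2))).
      assert (HK : 0 < K) by apply INR_fact_lt_0.
      exists (mkposreal (eps / K) (Rdiv_lt_0_compat _ _ Heps HK)).
      intros h Hh Hlt. simpl in Hlt.
      rewrite Rplus_0_l, (phi_zero j 0) by lra.
      rewrite Rminus_0_r, Rminus_0_r.
      destruct (Rlt_dec 0 h) as [hp|hn].
      * assert (B := phi_bound j h hp). fold K in B.
        assert (N := phi_nonneg j h).
        rewrite Rabs_right.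
        2:{ apply Rle_ge. unfold Rdiv. apply Rmult_le_pos; auto. apply Rlt_le, Rinv_0_lt_compat; lra. }
        rewrite Rabs_right in Hlt by lra.
        apply (Rmult_lt_reg_r h); auto. unfold Rdiv. rewrite Rmult_assoc, Rinv_l by lra.
        rewrite Rmult_1_r.
        apply (Rle_lt_trans _ (K * h ^ 2)); auto.
        assert (K * h < eps).
        { apply (Rmult_lt_reg_l (/ K)). apply Rinv_0_lt_compat; lra.
          rewrite <- Rmult_assoc, Rinv_l, Rmult_1_l by lra. 
          replace (/ K * eps) with (eps / K) by (unfold Rdiv; ring). lra. }
        simpl. nra.
      * rewrite phi_zero by lra. unfold Rdiv. rewrite Rmult_0_l, Rabs_R0. lra.
    + assert (Hn : x < 0) by lra.
      rewrite (phi_zero (S j)), (phi_zero (S (S j))) by lra.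
      replace (- INR j * 0 + 0) with (@zero R_NormedModule) by (simpl; unfold zero; simpl; ring).
      apply (is_derive_ext_loc (fun _ => 0)).
      * apply (locR x _ (- x)). lra. intros t Ht. apply Rabs_def2 in Ht.
        symmetry. apply phi_zero. lra.
      * apply is_derive_const.
Qed.

Definition sm1 (f : R -> R) : Prop :=
  exists S : (R -> R) -> Prop, S f /\
    forall g, S g -> exists g', (forall x, is_derive g x (g' x)) /\ S g'.

Lemma sm1_deriv f : sm1 f -> exists f', (forall x, is_derive f x (f' x)) /\ sm1 f'.
Proof.
  intros [S [Hf HS]]. destruct (HS f Hf) as [f' [H1 H2]].
  exists f'. split; auto. exists S. split; auto.
Qed.

Inductive Alg (B : (R -> R) -> Prop) : (R -> R) -> Prop :=
| Abase g : B g -> Alg B g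
| Acst c : Alg B (fun _ => c)
| Aadd f g : Alg B f -> Alg B g -> Alg B (fun x => f x + g x)
| Amul f g : Alg B f -> Alg B g -> Alg B (fun x => f x * g x).

Definition Dclosed (B : (R -> R) -> Prop) : Prop :=
  forall g, B g -> exists g', (forall x, is_derive g x (g' x)) /\ Alg B g'.

Lemma Alg_closed B : Dclosed B -> forall f, Alg B f ->
  exists f', (forall x, is_derive f x (f' x)) /\ Alg B f'.
Proof.
  intros HB f Hf. induction Hf.
  - apply HB; auto.
  - exists (fun _ => 0). split; [|apply Acst]. intros x. apply (is_derive_const c x).
  - destruct IHHf1 as [f' [Hf' Af']]. destruct IHHf2 as [g' [Hg' Ag']].
    exists (fun x => f' x + g' x). split; [|apply Aadd; auto].
    intros x. apply (is_derive_plus f g x); auto.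
  - destruct IHHf1 as [f' [Hf' Af']]. destruct IHHf2 as [g' [Hg' Ag']].
    exists (fun x => f' x * g x + f x * g' x). split.
    + intros x. apply (is_derive_mult f g x); auto. intros; apply Rmult_comm.
    + apply Aadd; apply Amul; auto.
Qed.

Lemma Alg_sm1 B : Dclosed B -> forall f, Alg B f -> sm1 f.
Proof.
  intros HB f Hf. exists (Alg B). split; auto. apply Alg_closed; auto.
Qed.

Lemma Alg_mono (B B' : (R -> R) -> Prop) : (forall g, B g -> B' g) ->
  forall f, Alg B f -> Alg B' f.
Proof.
  intros H f Hf. induction Hf; [apply Abase; auto | apply Acst | apply Aadd; auto | apply Amul; auto].
Qed.

Lemma sm1_continuous f x : sm1 f -> continuous f x.
Proof.
  intros Hs. destruct (sm1_deriv f Hs) as [f' [Hd _]].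
  apply (ex_derive_continuous (K:=R_AbsRing) (V:=R_NormedModule)). exists (f' x). apply Hd.
Qed.

Lemma is_derive_eq (f : R -> R) (x l l' : R) : is_derive f x l -> l = l' -> is_derive f x l'.
Proof. intros H <-; exact H. Qed.

Definition tw (x : R) := 2 * PI * x.

Definition B0 (g : R -> R) : Prop :=
  (exists c, g = fun x => cos (tw x + c)) \/
  (exists j c0 c1, g = fun x => phi j (c0 + c1 * cos (tw x))).

Lemma cos_shift_deriv u : - sin u = cos (u + PI / 2).
Proof. rewrite cos_plus, cos_PI2, sin_PI2. ring. Qed.

Lemma cos_tw_deriv c x : is_derive (fun x => cos (tw x + c)) x (2 * PI * cos (tw x + c + PI / 2)).
Proof.
  unfold tw. auto_derive; auto. rewrite <- cos_shift_deriv. ring.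
Qed.

Lemma B0_closed : Dclosed B0.
Proof.
  intros g [[c ->] | [j [c0 [c1 ->]]]].
  - exists (fun x => (fun _ => 2 * PI) x * (fun x => cos (tw x + (c + PI / 2))) x).
    split.
    + intros x. simpl. rewrite <- Rplus_assoc. apply cos_tw_deriv.
    + apply Amul. apply Acst. apply Abase. left. exists (c + PI/2). reflexivity.
  - exists (fun x =>
      ((fun _ => - INR j) x * (fun x => phi (S j) (c0 + c1 * cos (tw x))) x
       + (fun x => phi (S (S j)) (c0 + c1 * cos (tw x))) x) *
      ((fun _ => c1 * (2 * PI)) x * (fun x => cos (tw x + PI / 2)) x)).
    split.
    + intros x. simpl.
      assert (Hc : is_derive (fun x => cos (tw x)) x (2 * PI * cos (tw x + PI / 2))).
      { unfold tw. auto_derive; auto. rewrite <- cos_shift_deriv. ring. }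
      assert (Hh : is_derive (fun x => c0 + c1 * cos (tw x)) x (c1 * (2 * PI * cos (tw x + PI / 2)))).
      { unfold tw. auto_derive; auto. rewrite <- cos_shift_deriv. ring. }
      assert (Hd := is_derive_comp (phi j) (fun x => c0 + c1 * cos (tw x)) x _ _
                     (phi_deriv j (c0 + c1 * cos (tw x))) Hh).
      simpl in Hd. unfold scal in Hd; simpl in Hd; unfold mult in Hd; simpl in Hd.
      eapply is_derive_eq; [exact Hd|]. ring.
    + apply Amul; apply Aadd || apply Amul.
      * apply Amul. apply Acst. apply Abase. right. exists (S j), c0, c1. reflexivity.
      * apply Abase. right. exists (S (S j)), c0, c1. reflexivity.
      * apply Acst.
      * apply Abase. left. exists (PI/2). reflexivity.
Qed.

Definition alp (x : R) := phi 0 (1/2 + (-1) * cos (tw x)).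
Definition bet (x : R) := phi 0 (1/2 + 1 * cos (tw x)).
Definition DD (x : R) := alp x * alp x + bet x * bet x.

Lemma DD_pos x : 0 < DD x.
Proof.
  unfold DD, alp, bet.
  destruct (Rlt_dec 0 (1/2 + (-1) * cos (tw x))) as [H|H].
  - assert (A := phi_pos 0 _ H). assert (B := phi_nonneg 0 (1/2 + 1 * cos (tw x))). nra.
  - assert (H' : 0 < 1/2 + 1 * cos (tw x)) by lra.
    assert (A := phi_pos 0 _ H'). assert (B := phi_nonneg 0 (1/2 + (-1) * cos (tw x))). nra.
Qed.

Lemma Alg_alp : Alg B0 alp.
Proof. apply Abase. right. exists 0%nat, (1/2), (-1). reflexivity. Qed.
Lemma Alg_bet : Alg B0 bet.
Proof. apply Abase. right. exists 0%nat, (1/2), 1. reflexivity. Qed.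
Lemma Alg_DD : Alg B0 DD.
Proof. unfold DD. apply Aadd; apply Amul; auto using Alg_alp, Alg_bet. Qed.

Definition B1 (g : R -> R) : Prop :=
  B0 g \/ g = (fun x => / DD x) \/ g = (fun x => / sqrt (DD x)).

Lemma B1_closed : Dclosed B1.
Proof.
  assert (Hm : forall f, Alg B0 f -> Alg B1 f).
  { apply Alg_mono. intros g H. left. exact H. }
  destruct (Alg_closed B0 B0_closed DD Alg_DD) as [D' [HD' AD']].
  intros g [H | [-> | ->]].
  - destruct (B0_closed g H) as [g' [H1 H2]]. exists g'. split; auto.
  - exists (fun x => (fun _ => -1) x * (D' x * ((fun x => / DD x) x * (fun x => / DD x) x))).
    split.
    + intros x. assert (Hp := DD_pos x).
      eapply is_derive_eq. apply (is_derive_inv DD x (D' x)); auto; lra.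
      field. lra.
    + apply Amul. apply Acst. apply Amul. auto. apply Amul; apply Abase; right; left; reflexivity.
  - exists (fun x => (fun _ => -1/2) x * (D' x * ((fun x => / sqrt (DD x)) x * (fun x => / DD x) x))).
    split.
    + intros x. assert (Hp := DD_pos x).
      assert (Hs : 0 < sqrt (DD x)) by (apply sqrt_lt_R0; lra).
      assert (Hss : sqrt (DD x) * sqrt (DD x) = DD x) by (apply sqrt_sqrt; lra).
      eapply is_derive_eq.
      apply (is_derive_inv (fun x => sqrt (DD x)) x).
      apply is_derive_sqrt; auto. simpl. lra.
      simpl. set (s := sqrt (DD x)) in *. rewrite <- Hss. field. lra.
    + apply Amul. apply Acst. apply Amul. auto. apply Amul; apply Abase; right.
      right; reflexivity. left; reflexivity.
Qed.

Definition aa (x : R) := alp x * / sqrt (DD x).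
Definition bb (x : R) := bet x * / sqrt (DD x).

Lemma sm1_aa : sm1 aa.
Proof.
  apply (Alg_sm1 B1 B1_closed). unfold aa. apply Amul.
  apply (Alg_mono B0). intros g H; left; exact H. apply Alg_alp.
  apply Abase. right; right; reflexivity.
Qed.
Lemma sm1_bb : sm1 bb.
Proof.
  apply (Alg_sm1 B1 B1_closed). unfold bb. apply Amul.
  apply (Alg_mono B0). intros g H; left; exact H. apply Alg_bet.
  apply Abase. right; right; reflexivity.
Qed.

Lemma ab_sq x : aa x * aa x + bb x * bb x = 1.
Proof.
  unfold aa, bb. assert (Hp := DD_pos x).
  assert (Hs : 0 < sqrt (DD x)) by (apply sqrt_lt_R0; lra).
  assert (Hss : sqrt (DD x) * sqrt (DD x) = DD x) by (apply sqrt_sqrt; lra).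
  replace (alp x * / sqrt (DD x) * (alp x * / sqrt (DD x)) + bet x * / sqrt (DD x) * (bet x * / sqrt (DD x)))
    with ((alp x * alp x + bet x * bet x) / (sqrt (DD x) * sqrt (DD x))) by (field; lra).
  rewrite Hss. unfold DD. field. fold (DD x). lra.
Qed.

Lemma aa_zero x : 1/2 < cos (tw x) -> aa x = 0.
Proof. intros H. unfold aa, alp. rewrite phi_zero by lra. ring. Qed.
Lemma bb_zero x : 1/2 < - cos (tw x) -> bb x = 0.
Proof. intros H. unfold bb, bet. rewrite phi_zero by lra. ring. Qed.

Lemma cos_tw1 x : cos (tw (x + 1)) = cos (tw x).
Proof.
  unfold tw. replace (2 * PI * (x + 1)) with (2 * PI * x + 2 * INR 1 * PI) by (simpl; ring).
  apply cos_period.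
Qed.

Lemma aa_per x : aa (x + 1) = aa x.
Proof. unfold aa, DD, alp, bet. rewrite cos_tw1. reflexivity. Qed.
Lemma bb_per x : bb (x + 1) = bb x.
Proof. unfold bb, DD, alp, bet. rewrite cos_tw1. reflexivity. Qed.

Lemma aa_bound x : Rabs (aa x) <= 1.
Proof. assert (H := ab_sq x). apply Rabs_le. nra. Qed.
Lemma bb_bound x : Rabs (bb x) <= 1.
Proof. assert (H := ab_sq x). apply Rabs_le. nra. Qed.

Lemma loc2 (x y : R) (P : R * R -> Prop) (eps : R) : 0 < eps ->
  (forall a b, Rabs (a - x) < eps -> P (a, b)) -> locally (x, y) P.
Proof.
  intros He H. exists (mkposreal eps He). intros [a b] [Ha Hb]. apply H. exact Ha.
Qed.

Lemma c2_plus (f g : R * R -> R) z : continuous f z -> continuous g z ->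
  continuous (fun w => f w + g w) z.
Proof. intros. exact (continuous_plus (V:=R_NormedModule) f g z H H0). Qed.
Lemma c2_mult (f g : R * R -> R) z : continuous f z -> continuous g z ->
  continuous (fun w => f w * g w) z.
Proof. intros. exact (continuous_mult (K:=R_AbsRing) f g z H H0). Qed.
Lemma c2_const (c : R) z : continuous (fun _ : R * R => c) z.
Proof. apply continuous_const. Qed.
Lemma c2_fst (x y : R) : continuous (fun w : R * R => fst w) (x, y).
Proof. apply continuous_fst. Qed.
Lemma c2_snd (x y : R) : continuous (fun w : R * R => snd w) (x, y).
Proof. apply continuous_snd. Qed.
Lemma c2_comp1 (f : R * R -> R) (g : R -> R) z : continuous f z -> continuous g (f z) ->
  continuous (fun w => g (f w)) z.
Proof. intros. exact (continuous_comp f g z H H0). Qed.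

Lemma cont_cos u : continuous cos u.
Proof. apply (ex_derive_continuous (K:=R_AbsRing) (V:=R_NormedModule)). auto_derive. auto. Qed.

Lemma loc_gt (f : R -> R) x c : continuous f x -> c < f x -> locally x (fun t => c < f t).
Proof.
  intros Hf Hc. apply Hf. apply (locR (f x) _ (f x - c)). lra.
  intros t Ht. apply Rabs_def2 in Ht. lra.
Qed.

Lemma loc_ball (x : R) (P : R -> Prop) : locally x P -> exists eps, 0 < eps /\ forall t, Rabs (t - x) < eps -> P t.
Proof. intros [e He]. exists e. split. apply cond_pos. intros t Ht. apply He. exact Ht. Qed.

Record term := mkT { tK : R; tj : nat; tph : R; tv : R -> R }.

Definition Fl (del : R) (x : R) : R := IZR (Zfloor (x + del)).
Definition tval (del a0 m : R) (t : term) (x y : R) : R :=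
  tK t * Fl del x ^ tj t * cos (tw (a0 * x - m * Fl del x * y) + tph t) * tv t x.
Definition good (sg : R) (t : term) : Prop :=
  sm1 (tv t) /\ forall x, 1/2 < sg * cos (tw x) -> tv t x = 0.
Definition Hloc (del sg : R) : Prop :=
  forall x0, sg * cos (tw x0) <= 1/2 -> exists eps, 0 < eps /\
    forall t, Rabs (t - x0) < eps -> Zfloor (t + del) = Zfloor (x0 + del).
Definition dyt (m : R) (t : term) : term :=
  mkT (tK t * (-2 * PI * m)) (S (tj t)) (tph t + PI / 2) (tv t).
Definition dxt1 (a0 : R) (t : term) : term :=
  mkT (tK t * (2 * PI * a0)) (tj t) (tph t + PI / 2) (tv t).
Definition dxt2 (t : term) : term :=
  mkT (tK t) (tj t) (tph t) (Derive (tv t)).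

Lemma good_vloc sg t x : good sg t -> 1/2 < sg * cos (tw x) -> locally x (fun s => tv t s = 0).
Proof.
  intros [_ Hz] Hx.
  assert (Hc : continuous (fun s => sg * cos (tw s)) x).
  { apply (ex_derive_continuous (K:=R_AbsRing) (V:=R_NormedModule)). unfold tw. auto_derive. auto. }
  assert (L := loc_gt _ _ _ Hc Hx).
  eapply filter_imp; [|exact L]. intros s Hs. apply Hz. exact Hs.
Qed.

Lemma sm1_Derive v : sm1 v -> (forall x, is_derive v x (Derive v x)) /\ sm1 (Derive v).
Proof.
  intros Hs. destruct (sm1_deriv v Hs) as [f' [Hd Hs']].
  assert (E : Derive v = f').
  { apply functional_extensionality. intros x. apply is_derive_unique. apply Hd. }
  rewrite E. split; auto.
Qed.

Lemma Derive_loc0 (v : R -> R) x : locally x (fun s => v s = 0) -> Derive v x = 0.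
Proof.
  intros L. apply is_derive_unique.
  apply (is_derive_ext_loc (fun _ => 0)).
  eapply filter_imp; [|exact L]. intros s Hs. simpl. rewrite Hs. reflexivity.
  apply (is_derive_const (K:=R_AbsRing) (V:=R_NormedModule) 0 x).
Qed.

Lemma good_dyt sg m t : good sg t -> good sg (dyt m t).
Proof. intros H; exact H. Qed.
Lemma good_dxt1 sg a0 t : good sg t -> good sg (dxt1 a0 t).
Proof. intros H; exact H. Qed.
Lemma good_dxt2 sg t : good sg t -> good sg (dxt2 t).
Proof.
  intros H. split.
  - apply sm1_Derive. apply H.
  - intros x Hx. simpl. apply Derive_loc0. apply (good_vloc sg t x H Hx).
Qed.

Lemma T_dy del a0 m t x y :
  is_derive (fun s => tval del a0 m t x s) y (tval del a0 m (dyt m t) x y).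
Proof.
  unfold tval, dyt, tw. simpl. set (F := Fl del x).
  auto_derive; auto. rewrite <- Rplus_assoc, <- cos_shift_deriv. unfold Rminus. ring.
Qed.

Lemma T_dx del sg a0 m t x y : Hloc del sg -> good sg t ->
  is_derive (fun s => tval del a0 m t s y) x
    (tval del a0 m (dxt1 a0 t) x y + tval del a0 m (dxt2 t) x y).
Proof.
  intros HL Hg.
  destruct (Rlt_dec (1/2) (sg * cos (tw x))) as [HA|HB].
  - assert (L := good_vloc sg t x Hg HA).
    assert (E1 : tv t x = 0) by (apply (proj2 Hg); auto).
    assert (E2 : Derive (tv t) x = 0) by (apply Derive_loc0; auto).
    assert (V : tval del a0 m (dxt1 a0 t) x y + tval del a0 m (dxt2 t) x y = 0).
    { unfold tval, dxt1, dxt2. simpl. rewrite E1, E2. ring. }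
    rewrite V.
    apply (is_derive_ext_loc (fun _ => 0)).
    eapply filter_imp; [|exact L]. intros s Hs. cbv beta. unfold tval. rewrite Hs. symmetry. apply Rmult_0_r.
    apply (is_derive_const (K:=R_AbsRing) (V:=R_NormedModule) 0 x).
  - destruct (HL x (Rnot_lt_le _ _ HB)) as [eps [He Hfl]].
    set (F := Fl del x).
    assert (Hv := proj1 (sm1_Derive _ (proj1 Hg)) x).
    assert (Hc : is_derive (fun s => tK t * F ^ tj t * cos (tw (a0 * s - m * F * y) + tph t)) x
                  (tK t * F ^ tj t * (2 * PI * a0) * cos (tw (a0 * x - m * F * y) + tph t + PI / 2))).
    { unfold tw. auto_derive; auto. rewrite <- cos_shift_deriv. unfold Rminus. ring. }
    assert (Hm := is_derive_mult _ _ x _ _ Hc Hv (fun a b => Rmult_comm a b)).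
    simpl in Hm.
    apply (is_derive_ext_loc (fun s => tK t * F ^ tj t * cos (tw (a0 * s - m * F * y) + tph t) * tv t s)).
    + apply (locR x _ eps He). intros s Hs. unfold tval, Fl in *. rewrite (Hfl s Hs). reflexivity.
    + eapply is_derive_eq; [exact Hm|]. unfold tval, dxt1, dxt2, mult. simpl. fold F.
      rewrite Rplus_assoc. unfold plus; simpl. ring.
Qed.

Lemma T_cont del sg a0 m t x y : Hloc del sg -> good sg t ->
  continuous (fun z : R * R => tval del a0 m t (fst z) (snd z)) (x, y).
Proof.
  intros HL Hg.
  destruct (Rlt_dec (1/2) (sg * cos (tw x))) as [HA|HB].
  - assert (L := good_vloc sg t x Hg HA).
    destruct (loc_ball _ _ L) as [eps [He Heps]].
    apply (continuous_ext_loc _ (fun _ => 0)).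
    + apply (loc2 x y _ eps He). intros a b Ha. simpl. unfold tval. rewrite (Heps a Ha). symmetry. apply Rmult_0_r.
    + apply c2_const.
  - destruct (HL x (Rnot_lt_le _ _ HB)) as [eps [He Hfl]].
    set (F := Fl del x).
    apply (continuous_ext_loc _ (fun z : R * R => tK t * F ^ tj t * cos (tw (a0 * fst z - m * F * snd z) + tph t) * tv t (fst z))).
    + apply (loc2 x y _ eps He). intros a b Ha. simpl. unfold tval, Fl in *. rewrite (Hfl a Ha). reflexivity.
    + apply c2_mult.
      * apply c2_mult. apply c2_const.
        apply (c2_comp1 (fun z : R * R => tw (a0 * fst z - m * F * snd z) + tph t) cos).
        -- unfold tw. apply c2_plus; [|apply c2_const].
           apply c2_mult. apply c2_const. unfold Rminus.
           apply c2_plus. apply c2_mult. apply c2_const. apply c2_fst.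
           apply (c2_comp1 (fun z : R * R => m * F * snd z) Ropp).
           apply c2_mult. apply c2_const. apply c2_snd.
           apply (ex_derive_continuous (K:=R_AbsRing) (V:=R_NormedModule)). auto_derive. auto.
        -- apply cont_cos.
      * apply (c2_comp1 (fun z : R * R => fst z) (tv t)). apply c2_fst.
        apply sm1_continuous. apply Hg.
Qed.

Definition evalL (del a0 m : R) (L : list term) (x y : R) : R :=
  fold_right (fun t acc => tval del a0 m t x y + acc) 0 L.
Definition dyL (m : R) (L : list term) := map (dyt m) L.
Definition dxL (a0 : R) (L : list term) := flat_map (fun t => dxt1 a0 t :: dxt2 t :: nil) L.

Lemma L_cont del sg a0 m L x y : Hloc del sg -> List.Forall (good sg) L ->
  continuous (fun z : R * R => evalL del a0 m L (fst z) (snd z)) (x, y).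
Proof.
  intros HL HF. induction HF; simpl.
  - apply c2_const.
  - apply (c2_plus (fun z : R * R => tval del a0 m x0 (fst z) (snd z))).
    apply (T_cont del sg); auto. exact IHHF.
Qed.

Lemma L_dy del sg a0 m L x y : List.Forall (good sg) L ->
  is_derive (fun s => evalL del a0 m L x s) y (evalL del a0 m (dyL m L) x y).
Proof.
  intros HF. induction HF; simpl.
  - apply (is_derive_const (K:=R_AbsRing) (V:=R_NormedModule) 0 y).
  - apply (is_derive_plus (fun s => tval del a0 m x0 x s) (fun s => evalL del a0 m l x s)).
    apply T_dy. exact IHHF.
Qed.

Lemma L_dx del sg a0 m L x y : Hloc del sg -> List.Forall (good sg) L ->
  is_derive (fun s => evalL del a0 m L s y) x (evalL del a0 m (dxL a0 L) x y).
Proof.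
  intros HL HF. induction HF; simpl.
  - apply (is_derive_const (K:=R_AbsRing) (V:=R_NormedModule) 0 x).
  - eapply is_derive_eq.
    apply (is_derive_plus (fun s => tval del a0 m x0 s y) (fun s => evalL del a0 m l s y)).
    apply (T_dx del sg); auto. exact IHHF.
    unfold plus; simpl. fold (dxL a0 l). unfold evalL at 2. fold (evalL del a0 m (dxL a0 l) x y). ring.
Qed.

Lemma good_dyL sg m L : List.Forall (good sg) L -> List.Forall (good sg) (dyL m L).
Proof. intros HF. unfold dyL. induction HF; simpl; constructor; auto. Qed.
Lemma good_dxL sg a0 L : List.Forall (good sg) L -> List.Forall (good sg) (dxL a0 L).
Proof.
  intros HF. unfold dxL. induction HF; simpl. constructor.
  apply Forall_cons; [apply good_dxt1; auto|].
  apply Forall_cons; [apply good_dxt2; auto| exact IHHF].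
Qed.

Lemma L_Ck del sg a0 m : Hloc del sg -> forall k L, List.Forall (good sg) L ->
  qh_Ck k (fun x y => evalL del a0 m L x y).
Proof.
  intros HL k. induction k; intros L HF; simpl; split.
  - intros x y. apply (L_cont del sg); auto.
  - exact I.
  - intros x y. apply (L_cont del sg); auto.
  - exists (fun x y => evalL del a0 m (dxL a0 L) x y), (fun x y => evalL del a0 m (dyL m L) x y).
    split; [|split; [|split]].
    + intros x y. apply (L_dx del sg); auto.
    + intros x y. apply (L_dy del sg); auto.
    + apply IHk. apply good_dxL; auto.
    + apply IHk. apply good_dyL; auto.
Qed.

Lemma INR_Z (z : Z) : (0 <= z)%Z -> INR (Z.to_nat z) = IZR z.
Proof. intros H. rewrite INR_IZR_INZ, Z2Nat.id; auto. Qed.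

Lemma trig_tw_int (t : R) (z : Z) :
  cos (tw (t + IZR z)) = cos (tw t) /\ sin (tw (t + IZR z)) = sin (tw t).
Proof.
  unfold tw. destruct (Z_le_gt_dec 0 z) as [H|H].
  - replace (2 * PI * (t + IZR z)) with (2 * PI * t + 2 * INR (Z.to_nat z) * PI)
      by (rewrite INR_Z by auto; ring).
    split; [apply cos_period | apply sin_period].
  - assert (H' : (0 <= - z)%Z) by lia.
    replace (2 * PI * t) with (2 * PI * (t + IZR z) + 2 * INR (Z.to_nat (- z)) * PI)
      by (rewrite INR_Z by auto; rewrite opp_IZR; ring).
    split; symmetry; [apply cos_period | apply sin_period].
Qed.

Lemma cos_tw_Z (z : Z) : cos (tw (IZR z)) = 1.
Proof.
  replace (IZR z) with (0 + IZR z) by ring. rewrite (proj1 (trig_tw_int 0 z)).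
  unfold tw. rewrite Rmult_0_r. apply cos_0.
Qed.

Lemma cos_tw_Zh (z : Z) : cos (tw (IZR z - 1/2)) = -1.
Proof.
  replace (IZR z - 1/2) with (- (1/2) + IZR z) by ring. rewrite (proj1 (trig_tw_int _ z)).
  unfold tw. replace (2 * PI * - (1/2)) with (- PI) by field. rewrite cos_neg. apply cos_PI.
Qed.

Lemma floor_loc (del x0 : R) : IZR (Zfloor (x0 + del)) <> x0 + del ->
  exists eps, 0 < eps /\ forall t, Rabs (t - x0) < eps -> Zfloor (t + del) = Zfloor (x0 + del).
Proof.
  intros Hne. set (k := Zfloor (x0 + del)).
  assert (B := Zfloor_bound (x0 + del)). fold k in B.
  assert (Hlt : IZR k < x0 + del) by (destruct B; fold k in Hne; lra).
  exists (Rmin (x0 + del - IZR k) (IZR k + 1 - (x0 + del))). split.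
  - apply Rmin_glb_lt; lra.
  - intros t Ht. apply Zfloor_eq.
    assert (H1 := Rmin_l (x0 + del - IZR k) (IZR k + 1 - (x0 + del))).
    assert (H2 := Rmin_r (x0 + del - IZR k) (IZR k + 1 - (x0 + del))).
    apply Rabs_def2 in Ht. lra.
Qed.

Lemma Hloc_a : Hloc 0 1.
Proof.
  intros x0 Hx. apply floor_loc. intros E.
  assert (x0 = IZR (Zfloor (x0 + 0))) by lra.
  rewrite H, cos_tw_Z in Hx. lra.
Qed.

Lemma Hloc_b : Hloc (1/2) (-1).
Proof.
  intros x0 Hx. apply floor_loc. intros E.
  assert (x0 = IZR (Zfloor (x0 + 1/2)) - 1/2) by lra.
  rewrite H, cos_tw_Zh in Hx. lra.
Qed.

Lemma fold_seq (a : Z -> C) (q0 : Z) (N : nat) : (forall q, q <> q0 -> a q = 0%C) ->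
  forall len s, fold_right Cplus 0%C (map (fun k => a (Z.of_nat k - Z.of_nat N)%Z) (seq s len)) =
    if (andb (Z.of_nat s <=? q0 + Z.of_nat N)%Z (q0 + Z.of_nat N <? Z.of_nat (s + len))%Z)
    then a q0 else 0%C.
Proof.
  intros Ha len. induction len; intros s; simpl.
  - replace (andb (Z.of_nat s <=? q0 + Z.of_nat N)%Z (q0 + Z.of_nat N <? Z.of_nat (s + 0))%Z) with false.
    reflexivity. symmetry. apply Bool.andb_false_iff.
    destruct (Z.leb_spec (Z.of_nat s) (q0 + Z.of_nat N)); [right|left; auto].
    apply Z.ltb_ge. lia.
  - rewrite IHlen.
    destruct (Z.eq_dec (Z.of_nat s - Z.of_nat N) q0) as [E|E].
    + rewrite E.
      replace (andb (Z.of_nat (S s) <=? q0 + Z.of_nat N)%Z (q0 + Z.of_nat N <? Z.of_nat (S s + len))%Z) with false.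
      replace (andb (Z.of_nat s <=? q0 + Z.of_nat N)%Z (q0 + Z.of_nat N <? Z.of_nat (s + S len))%Z) with true.
      apply Cplus_0_r.
      symmetry. apply Bool.andb_true_iff. split. apply Z.leb_le; lia. apply Z.ltb_lt; lia.
      symmetry. apply Bool.andb_false_iff. left. apply Z.leb_gt. lia.
    + rewrite (Ha _ E), Cplus_0_l.
      replace (andb (Z.of_nat (S s) <=? q0 + Z.of_nat N)%Z (q0 + Z.of_nat N <? Z.of_nat (S s + len))%Z)
        with (andb (Z.of_nat s <=? q0 + Z.of_nat N)%Z (q0 + Z.of_nat N <? Z.of_nat (s + S len))%Z).
      reflexivity.
      destruct (Z.leb_spec (Z.of_nat s) (q0 + Z.of_nat N));
      destruct (Z.leb_spec (Z.of_nat (S s)) (q0 + Z.of_nat N));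
      destruct (Z.ltb_spec (q0 + Z.of_nat N) (Z.of_nat (s + S len)));
      destruct (Z.ltb_spec (q0 + Z.of_nat N) (Z.of_nat (S s + len))); simpl; auto; lia.
Qed.

Lemma zsum_single (a : Z -> C) (q0 : Z) (N : nat) : (forall q, q <> q0 -> a q = 0%C) ->
  ((Z.abs q0 <= Z.of_nat N)%Z \/ a q0 = 0%C) -> qh_zsum N a = a q0.
Proof.
  intros Ha Hq. unfold qh_zsum. rewrite (fold_seq a q0 N Ha).
  destruct (andb (Z.of_nat 0 <=? q0 + Z.of_nat N)%Z (q0 + Z.of_nat N <? Z.of_nat (0 + (2 * N + 1)))%Z) eqn:E.
  reflexivity.
  destruct Hq as [Hq|Hq]; [|auto].
  exfalso. apply Bool.andb_false_iff in E. destruct E as [E|E].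
  apply Z.leb_gt in E; lia. apply Z.ltb_ge in E; lia.
Qed.

Lemma supp_spec (F : HFun) : (exists N : nat, forall x y q, (Z.of_nat N < Z.abs q)%Z -> F x y q = 0%C) ->
  forall x y q, (Z.of_nat (qh_supp_bound F) < Z.abs q)%Z -> F x y q = 0%C.
Proof.
  intros H. unfold qh_supp_bound. apply (epsilon_spec (inhabits 0%nat) _ H).
Qed.

Lemma Cconj0 : Cconj 0%C = 0%C.
Proof. apply injective_projections; simpl; ring. Qed.
Lemma Cmult0l z : Cmult 0%C z = 0%C.
Proof. apply injective_projections; simpl; ring. Qed.
Lemma Cmult0r z : Cmult z 0%C = 0%C.
Proof. apply injective_projections; simpl; ring. Qed.

Lemma supp_n (X : HFun) (n : Z) : (forall x y p, p <> n -> X x y p = 0%C) ->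
  exists N : nat, forall x y q, (Z.of_nat N < Z.abs q)%Z -> X x y q = 0%C.
Proof.
  intros H. exists (Z.abs_nat n). intros x y q Hq. apply H. intros ->. lia.
Qed.

Lemma star_supp (mu nu : R) (X : HFun) (n : Z) : (forall x y p, p <> n -> X x y p = 0%C) ->
  forall x y p, p <> (- n)%Z -> qh_star mu nu X x y p = 0%C.
Proof.
  intros H x y p Hp. unfold qh_star. rewrite H. apply Cconj0. lia.
Qed.

Lemma mul_star_X (mu nu : R) (X : HFun) (n : Z) (w : R -> R -> R) :
  (forall x y p, p <> n -> X x y p = 0%C) ->
  (forall x y, Cmult (Cconj (X x y n)) (X x y n) = RtoC (w x y)) ->
  forall x y p, qh_mul mu nu (qh_star mu nu X) X x y p =
    if Z.eq_dec p 0 then RtoC (w (x - 2 * IZR (- n) * mu) (y - 2 * IZR (- n) * nu)) else 0%C.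
Proof.
  intros H0 Hw x y p. unfold qh_mul.
  assert (HS := star_supp mu nu X n H0).
  assert (Hsp := supp_spec (qh_star mu nu X) (supp_n _ (- n) HS)).
  rewrite (zsum_single _ (- n)).
  - unfold qh_star at 1. rewrite Z.opp_involutive.
    destruct (Z.eq_dec p 0) as [->|Hp].
    + replace (0 - - n)%Z with n by lia. apply Hw.
    + rewrite (H0 _ _ (p - - n)%Z) by lia. apply Cmult0r.
  - intros q Hq. rewrite (HS x y q Hq). apply Cmult0l.
  - destruct (Z_le_gt_dec (Z.abs (- n)) (Z.of_nat (qh_supp_bound (qh_star mu nu X)))) as [h|h].
    left; auto. right. rewrite Hsp by lia. apply Cmult0l.
Qed.

Lemma mul_X_star (mu nu : R) (X : HFun) (n : Z) (w : R -> R -> R) :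
  (forall x y p, p <> n -> X x y p = 0%C) ->
  (forall x y, Cmult (X x y n) (Cconj (X x y n)) = RtoC (w x y)) ->
  forall x y p, qh_mul mu nu X (qh_star mu nu X) x y p =
    if Z.eq_dec p 0 then RtoC (w x y) else 0%C.
Proof.
  intros H0 Hw x y p. unfold qh_mul.
  assert (Hsp := supp_spec X (supp_n X n H0)).
  rewrite (zsum_single _ n).
  - unfold qh_star.
    destruct (Z.eq_dec p 0) as [->|Hp].
    + replace (- (0 - n))%Z with n by lia.
      replace (x - 2 * IZR n * mu - 2 * IZR (0 - n) * mu) with x by (rewrite minus_IZR; ring).
      replace (y - 2 * IZR n * nu - 2 * IZR (0 - n) * nu) with y by (rewrite minus_IZR; ring).
      apply Hw.
    + rewrite (H0 _ _ (- (p - n))%Z) by lia. rewrite Cconj0. apply Cmult0r.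
  - intros q Hq. rewrite (H0 x y q Hq). apply Cmult0l.
  - destruct (Z_le_gt_dec (Z.abs n) (Z.of_nat (qh_supp_bound X))) as [h|h].
    left; auto. right. rewrite Hsp by lia. apply Cmult0l.
Qed.

Definition thF (del a0 m : R) (x y : R) : R := a0 * x - m * Fl del x * y.
Definition xiF (del a0 m : R) (n : Z) (u : R -> R) : HFun := fun x y p =>
  if Z.eq_dec p n then (cos (tw (thF del a0 m x y)) * u x, sin (tw (thF del a0 m x y)) * u x) else 0%C.

Lemma xiF_zero del a0 m n u : forall x y p, p <> n -> xiF del a0 m n u x y p = 0%C.
Proof. intros x y p H. unfold xiF. destruct (Z.eq_dec p n); [contradiction|reflexivity]. Qed.

Lemma xiF_cm1 del a0 m n u x y :
  Cmult (Cconj (xiF del a0 m n u x y n)) (xiF del a0 m n u x y n) = RtoC (u x * u x).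
Proof.
  unfold xiF. destruct (Z.eq_dec n n); [|congruence].
  set (t := tw (thF del a0 m x y)). assert (E := sin2_cos2 t). unfold Rsqr in E.
  apply injective_projections; simpl; [|ring].
  transitivity (u x * u x * (sin t * sin t + cos t * cos t)); [ring|]. rewrite E. ring.
Qed.

Lemma xiF_cm2 del a0 m n u x y :
  Cmult (xiF del a0 m n u x y n) (Cconj (xiF del a0 m n u x y n)) = RtoC (u x * u x).
Proof.
  unfold xiF. destruct (Z.eq_dec n n); [|congruence].
  set (t := tw (thF del a0 m x y)). assert (E := sin2_cos2 t). unfold Rsqr in E.
  apply injective_projections; simpl; [|ring].
  transitivity (u x * u x * (sin t * sin t + cos t * cos t)); [ring|]. rewrite E. ring.
Qed.

Lemma Ck_ext k (g1 g2 : R -> R -> R) : (forall x y, g1 x y = g2 x y) -> qh_Ck k g2 -> qh_Ck k g1.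
Proof.
  intros H. replace g1 with g2; auto.
  apply functional_extensionality; intros x. apply functional_extensionality; intros y. auto.
Qed.

Lemma xiF_smooth del sg a0 m n u : Hloc del sg -> sm1 u ->
  (forall x, 1/2 < sg * cos (tw x) -> u x = 0) ->
  forall p, qh_smooth (fun x y => xiF del a0 m n u x y p).
Proof.
  intros HL Hs Hz p k.
  assert (G : forall ph, good sg (mkT 1 0 ph u)) by (intros; split; auto).
  unfold xiF. destruct (Z.eq_dec p n) as [_|_]; simpl; split.
  - apply (Ck_ext k _ (fun x y => evalL del a0 m (mkT 1 0 0 u :: nil) x y)).
    + intros x y. unfold evalL, tval, thF. simpl. ring_simplify. rewrite Rplus_0_r. ring.
    + apply (L_Ck del sg); auto.
  - apply (Ck_ext k _ (fun x y => evalL del a0 m (mkT 1 0 (- (PI / 2)) u :: nil) x y)).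
    + intros x y. unfold evalL, tval, thF. simpl.
      replace (tw (a0 * x - m * Fl del x * y) + - (PI / 2))
        with (- (PI / 2 - tw (a0 * x - m * Fl del x * y))) by ring.
      rewrite cos_neg, cos_shift. ring.
    + apply (L_Ck del sg); auto.
  - apply (Ck_ext k _ (fun x y => evalL del a0 m nil x y)). intros; reflexivity.
    apply (L_Ck del sg); auto.
  - apply (Ck_ext k _ (fun x y => evalL del a0 m nil x y)). intros; reflexivity.
    apply (L_Ck del sg); auto.
Qed.

Lemma contC (f g : R * R -> R) z : continuous f z -> continuous g z ->
  continuous (fun w => ((f w, g w) : C)) z.
Proof. intros Hf Hg.
  apply (continuous_comp_2 f g (fun a b => ((a,b):C))); auto.
  intros P [eps HP]. simpl. exists eps. intros [a b] H. apply HP. exact H.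
Qed.

Lemma Fl_succ del x : Fl del (x + 1) = Fl del x + 1.
Proof.
  unfold Fl. replace (x + 1 + del) with ((x + del) + IZR 1) by ring.
  rewrite Zfloor_addz, plus_IZR. reflexivity.
Qed.

Lemma xiF_D0 (c : Z) (nu : R) del sg n u : Hloc del sg -> sm1 u ->
  (forall x, 1/2 < sg * cos (tw x) -> u x = 0) ->
  (forall x, Rabs (u x) <= 1) -> (forall x, u (x + 1) = u x) ->
  qh_in_Dn c nu n (xiF del (IZR c * IZR n * IZR n * nu) (IZR c * IZR n) n u).
Proof.
  intros HL Hs Hz Hb Hp.
  set (a0 := IZR c * IZR n * IZR n * nu). set (m := IZR c * IZR n).
  split; [|apply xiF_zero]. split; [|split; [|split; [|split]]].
  - apply supp_n with n. apply xiF_zero.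
  - intros p x y. destruct (Z.eq_dec p n) as [->|Hne].
    + assert (S := xiF_smooth del sg a0 m n u HL Hs Hz n 0%nat).
      destruct S as [[S1 _] [S2 _]].
      apply (continuous_ext_loc _ (fun z : R * R => (fst (xiF del a0 m n u (fst z) (snd z) n),
                                                      snd (xiF del a0 m n u (fst z) (snd z) n)))).
      * apply filter_forall. intros z. simpl. symmetry. apply surjective_pairing.
      * apply contC; auto.
    + apply (continuous_ext_loc (U:=C_UniformSpace) _ (fun _ => (0, 0))).
      * apply filter_forall. intros z. simpl. rewrite xiF_zero; auto.
      * apply continuous_const.
  - intros p. exists 1. intros x y. unfold xiF. destruct (Z.eq_dec p n).
    + unfold Cmod. simpl. apply (Rle_trans _ (sqrt 1)); [apply sqrt_le_1_alt | rewrite sqrt_1; lra].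
      set (t := tw (thF del a0 m x y)). assert (E := sin2_cos2 t). unfold Rsqr in E.
      assert (Hu := Hb x). assert (Hu2 : u x * u x <= 1) by (destruct (Rcase_abs (u x)); [rewrite Rabs_left in Hu by auto | rewrite Rabs_right in Hu by auto]; nra).
      replace ((cos t * u x) * ((cos t * u x) * 1) + (sin t * u x) * ((sin t * u x) * 1))
        with (u x * u x * (sin t * sin t + cos t * cos t)) by ring.
      rewrite E. nra.
    + unfold Cmod. simpl. replace (0 * (0 * 1) + 0 * (0 * 1)) with 0 by ring.
      rewrite sqrt_0. lra.
  - intros x y p. unfold xiF. destruct (Z.eq_dec p n); [|reflexivity].
    unfold thF. set (F := Fl del x).
    assert (E : a0 * x - m * F * (y + 1) = (a0 * x - m * F * y) + IZR (- (c * n * Zfloor (x + del)))).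
    { rewrite opp_IZR, !mult_IZR. unfold F, Fl, m. ring. }
    rewrite E, (proj1 (trig_tw_int _ _)), (proj2 (trig_tw_int _ _)). reflexivity.
  - intros x y p. unfold xiF. destruct (Z.eq_dec p n) as [->|Hne].
    + unfold thF. rewrite Fl_succ, Hp. unfold qh_e.
      set (s := - IZR c * IZR n * (y - IZR n * nu)).
      assert (E : a0 * (x + 1) - m * (Fl del x + 1) * y = (a0 * x - m * Fl del x * y) + s).
      { unfold s, a0, m. ring. }
      rewrite E. set (t := a0 * x - m * Fl del x * y).
      replace (tw (t + s)) with (tw t + 2 * PI * s) by (unfold tw; ring).
      rewrite cos_plus, sin_plus.
      apply injective_projections; simpl; unfold tw; ring.
    + rewrite Cmult0r. reflexivity.
Qed.

Theorem mainTheorem10 (c : Z) (mu nu : R) (hc : (0 < c)%Z) (n : Z) :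
  exists xi1 xi2 : HFun,
    qh_in_Dn c nu n xi1 /\ qh_in_Dn c nu n xi2 /\
    qh_add (qh_mul mu nu (qh_star mu nu xi1) xi1) (qh_mul mu nu (qh_star mu nu xi2) xi2) = qh_one /\
    qh_add (qh_mul mu nu xi1 (qh_star mu nu xi1)) (qh_mul mu nu xi2 (qh_star mu nu xi2)) = qh_one /\
    (forall p, qh_smooth (fun x y => xi1 x y p)) /\
    (forall p, qh_smooth (fun x y => xi2 x y p)).
Proof.
  set (a0 := IZR c * IZR n * IZR n * nu). set (m := IZR c * IZR n).
  assert (Za : forall x, 1/2 < 1 * cos (tw x) -> aa x = 0).
  { intros x H. apply aa_zero. lra. }
  assert (Zb : forall x, 1/2 < -1 * cos (tw x) -> bb x = 0).
  { intros x H. apply bb_zero. lra. }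
  exists (xiF 0 a0 m n aa), (xiF (1/2) a0 m n bb).
  split; [apply (xiF_D0 c nu 0 1); auto using Hloc_a, sm1_aa, aa_bound, aa_per|].
  split; [apply (xiF_D0 c nu (1/2) (-1)); auto using Hloc_b, sm1_bb, bb_bound, bb_per|].
  split; [|split; [|split]].
  - apply functional_extensionality; intros x. apply functional_extensionality; intros y.
    apply functional_extensionality; intros p. unfold qh_add.
    rewrite (mul_star_X mu nu _ n (fun x y => aa x * aa x)) by (apply xiF_zero || apply xiF_cm1).
    rewrite (mul_star_X mu nu _ n (fun x y => bb x * bb x)) by (apply xiF_zero || apply xiF_cm1).
    unfold qh_one. destruct (Z.eq_dec p 0) as [->|Hp]; simpl.
    + apply injective_projections; simpl; [apply ab_sq | ring].
    + destruct (Z.eqb_spec p 0); [contradiction|]. apply Cplus_0_l.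
  - apply functional_extensionality; intros x. apply functional_extensionality; intros y.
    apply functional_extensionality; intros p. unfold qh_add.
    rewrite (mul_X_star mu nu _ n (fun x y => aa x * aa x)) by (apply xiF_zero || apply xiF_cm2).
    rewrite (mul_X_star mu nu _ n (fun x y => bb x * bb x)) by (apply xiF_zero || apply xiF_cm2).
    unfold qh_one. destruct (Z.eq_dec p 0) as [->|Hp]; simpl.
    + apply injective_projections; simpl; [apply ab_sq | ring].
    + destruct (Z.eqb_spec p 0); [contradiction|]. apply Cplus_0_l.
  - apply (xiF_smooth 0 1); auto using Hloc_a, sm1_aa.
  - apply (xiF_smooth (1/2) (-1)); auto using Hloc_b, sm1_bb.
Qed.
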